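(* Let $\mathbb{Z}[t]^o$ denote the submodule of $\mathrm{Hom}_{\mathbb{Z}}(\mathbb{Z}[t],\mathbb{Z})$ consisting of those $f$ whose kernel contains an ideal $I$ of $\mathbb{Z}[t]$ with $\mathbb{Z}[t]/I$ a free $\mathbb{Z}$-module of finite rank; identifying $f$ with the sequence $(f_n)_{n\ge 0}$, $f_n=f(t^n)$, $\mathbb{Z}[t]^o$ is exactly the module of integral linear recursive sequences, and it carries the co-ring structure dual to the multiplication of $\mathbb{Z}[t]$. Let $\pi:\mathbb{Z}[t]^o\to\mathbb{Z}$, $\pi(f)=f_1$ (dual to $\mathbb{Z}\hookrightarrow\mathbb{Z}[t]$, $a\mapsto at$). Then the cofree bi-ring on the ring $\mathbb{Z}$ (the value at $\mathbb{Z}$ of the right adjoint of the forgetful functor from bi-rings to rings, which coincides with the value at $\mathbb{Z}$ of the right adjoint of the forgetful functor from commutative cocommutative bi-rings to commutative rings) is $\mathbb{Z}[t]^o$ with this co-ring structure, and its ring structure — the unique one making $\pi$ a ring homomorphism compatible with the universal property — is the Hadamard product $(f\cdot g)_n=f_n g_n$ with unit the constant sequence $(1,1,1,\dots)$. In other words, the coordinate bi-ring of $\mathrm{Spec}(\mathbb{Z})/\mathbb{F}_1$ is the co-ring of integral linear recursive sequences equipped with the Hadamard product.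
   Context: Rings, co-rings and bi-rings are over $\mathbb{Z}$ with torsion-free underlying modules; a bi-ring is a torsion-free $\mathbb{Z}$-bialgebra (ring and co-ring such that comultiplication and counit are ring maps). An integral linear recursive sequence is a sequence $(f_n)_{n\ge0}$ of integers for which there exist $r>0$ and $a_1,\dots,a_r\in\mathbb{Z}$ with $f_n=a_1f_{n-1}+\dots+a_rf_{n-r}$ for all $n\ge r$. The co-ring structure on $\mathbb{Z}[t]^o$ is the direct limit of the duals of the rings $\mathbb{Z}[t]/(m(t))$, $m$ monic. The paper proposes that $\mathbb{F}_1$-algebras are bi-rings, the co-ring structure being descent data from $\mathbb{Z}$ to $\mathbb{F}_1$, and the coordinate bi-ring of $\mathrm{Spec}(\mathbb{Z})/\mathbb{F}_1$ is by definition the cofree bi-ring on $\mathbb{Z}$ (right adjoint of the forgetful functor applied to $\mathbb{Z}$). *)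

(* Defs.v *)
From HB Require Import structures.
From mathcomp Require Import all_boot all_order all_algebra.
Set Implicit Arguments. Unset Strict Implicit. Unset Printing Implicit Defensive.
Import Order.TTheory GRing.Theory Num.Theory.
Local Open Scope ring_scope.

(* Two formal sums  sum_i x_i (x) y_i  represent the same element of V (x)_Z V
   iff they agree under every biadditive map to every abelian group
   (universal property of the tensor product). *)
Definition biadditive (V M : zmodType) (b : V -> V -> M) : Prop :=
  (forall x y z, b (x + y) z = b x z + b y z) /\
  (forall x y z, b x (y + z) = b x y + b x z).

Definition teq2 (V : zmodType) (s t : seq (V * V)) : Prop :=
  forall (M : zmodType) (b : V -> V -> M), biadditive b ->
    \sum_(p <- s) b p.1 p.2 = \sum_(p <- t) b p.1 p.2.

Definition triadditive (V M : zmodType) (b : V -> V -> V -> M) : Prop :=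
  (forall x x' y z, b (x + x') y z = b x y z + b x' y z) /\
  (forall x y y' z, b x (y + y') z = b x y z + b x y' z) /\
  (forall x y z z', b x y (z + z') = b x y z + b x y z').

Definition teq3 (V : zmodType) (s t : seq (V * V * V)) : Prop :=
  forall (M : zmodType) (b : V -> V -> V -> M), triadditive b ->
    \sum_(p <- s) b p.1.1 p.1.2 p.2 = \sum_(p <- t) b p.1.1 p.1.2 p.2.

(* D x is a representative (formal sum of pure tensors) of Delta(x). *)
Definition biring_axioms (B : pzRingType) (D : B -> seq (B * B)) (e : B -> int)
  : Prop :=
  [/\
      forall (x : B) (n : nat), (0 < n)%N -> x *+ n = 0 -> x = 0,
      (forall x y, e (x + y) = e x + e y) /\ e 1 = 1 /\
      (forall x y, e (x * y) = e x * e y),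
      (forall x y, teq2 (D (x + y)) (D x ++ D y)) /\
      teq2 (D 1) [:: (1, 1)] /\
      (forall x y, teq2 (D (x * y))
                        [seq (p.1 * q.1, p.2 * q.2) | p <- D x, q <- D y]),
      forall x, \sum_(p <- D x) (p.2 *~ e p.1) = x /\
                \sum_(p <- D x) (p.1 *~ e p.2) = x
    &
      forall x, teq3 [seq (q.1, q.2, p.2) | p <- D x, q <- D p.1]
                     [seq (p.1, q.1, q.2) | p <- D x, q <- D p.2]].

Record biring := BiRing {
  br_ring :> pzRingType;
  br_D : br_ring -> seq (br_ring * br_ring);
  br_e : br_ring -> int;
  br_ax : biring_axioms br_D br_e }.

Definition ring_hom_to_Z (B : pzRingType) (phi : B -> int) : Prop :=
  (forall x y, phi (x + y) = phi x + phi y) /\ phi 1 = 1 /\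
  (forall x y, phi (x * y) = phi x * phi y).

Definition biring_hom (B C : biring) (f : B -> C) : Prop :=
  [/\ forall x y : B, f (x + y) = f x + f y,
      f 1 = 1,
      forall x y : B, f (x * y) = f x * f y,
      forall x : B, @br_e C (f x) = @br_e B x
    & forall x : B, teq2 (@br_D C (f x)) [seq (f p.1, f p.2) | p <- @br_D B x]].

(* the linear form on Z[t] attached to a sequence: f(t^n) = f_n *)
Definition seq_pair (f : nat -> int) (p : {poly int}) : int :=
  \sum_(i < size p) p`_i * f i.

Definition is_ideal (I : {poly int} -> Prop) : Prop :=
  [/\ I 0, (forall p q, I p -> I q -> I (p + q)) & (forall p q, I q -> I (p * q))].

(* Z[t]/I is a free Z-module of finite rank n, with basis the classes of e_i *)
Definition free_finite_quotient (I : {poly int} -> Prop) : Prop :=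
  exists (n : nat) (e : 'I_n -> {poly int}),
    forall p : {poly int}, exists! c : {ffun 'I_n -> int},
      I (p - \sum_(i < n) c i *: e i).

Definition ZtO (f : nat -> int) : Prop :=
  exists I : {poly int} -> Prop,
    [/\ is_ideal I, free_finite_quotient I & forall p, I p -> seq_pair f p = 0].

Definition linrec (f : nat -> int) : Prop :=
  exists (r : nat) (a : 'I_r -> int), (0 < r)%N /\
    forall n, (r <= n)%N -> f n = \sum_(i < r) a i * f (n - i.+1)%N.

(* Main.v *)
Require Import Defs.
From HB Require Import structures.
From mathcomp Require Import all_boot all_order all_algebra.
From mathcomp Require Import boolp zify.
Import Order.TTheory GRing.Theory Num.Theory.
Local Open Scope ring_scope.
Set Implicit Arguments. Unset Strict Implicit. Unset Printing Implicit Defensive.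


Section SP.
Implicit Types (f g : nat -> int) (p q : {poly int}).

Lemma sp_widen f p n : (size p <= n)%N ->
  seq_pair f p = \sum_(i < n) p`_i * f i.
Proof.
move=> H; rewrite /seq_pair -(subnKC H) big_split_ord /=.
rewrite [X in _ + X]big1 ?addr0 // => i _.
by rewrite nth_default ?mul0r // leq_addr.
Qed.

Lemma spD f p q : seq_pair f (p + q) = seq_pair f p + seq_pair f q.
Proof.
set n := maxn (size p) (size q).
rewrite (@sp_widen f (p + q) n) ?(leq_trans (size_polyD _ _)) //.
rewrite (@sp_widen f p n) ?leq_maxl // (@sp_widen f q n) ?leq_maxr //.
by rewrite -big_split /=; apply: eq_bigr => i _; rewrite coefD mulrDl.
Qed.

Lemma spZ f c p : seq_pair f (c *: p) = c * seq_pair f p.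
Proof.
rewrite (@sp_widen f (c *: p) (size p)) ?size_scale_leq // /seq_pair mulr_sumr.
by apply: eq_bigr => i _; rewrite coefZ mulrA.
Qed.

Lemma sp0 f : seq_pair f 0 = 0.
Proof. by rewrite /seq_pair size_poly0 big_ord0. Qed.

Lemma spN f p : seq_pair f (- p) = - seq_pair f p.
Proof. by rewrite -scaleN1r spZ mulN1r. Qed.

Lemma spB f p q : seq_pair f (p - q) = seq_pair f p - seq_pair f q.
Proof. by rewrite spD spN. Qed.

Lemma sp_sum f (I : Type) (r : seq I) (P : pred I) (F : I -> {poly int}) :
  seq_pair f (\sum_(i <- r | P i) F i) = \sum_(i <- r | P i) seq_pair f (F i).
Proof. exact: (big_morph _ (spD f) (sp0 f)). Qed.

Lemma spXn f n : seq_pair f 'X^n = f n.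
Proof.
rewrite /seq_pair size_polyXn big_ord_recr /= coefXn eqxx mul1r big1 ?add0r //.
by move=> i _; rewrite coefXn (ltn_eqF (ltn_ord i)) mul0r.
Qed.

Lemma poly_expand p : p = \sum_(i < size p) p`_i *: 'X^i.
Proof. by rewrite -poly_def coefK. Qed.

Lemma poly_expand_n p n : (size p <= n)%N -> p = \sum_(i < n) p`_i *: 'X^i.
Proof.
move=> H; rewrite -poly_def; apply/polyP => k; rewrite coef_poly.
case: ifP => // /negbT; rewrite -leqNgt => Hk.
by rewrite nth_default // (leq_trans H).
Qed.

Lemma sp_addf f g p : seq_pair (fun i => f i + g i) p = seq_pair f p + seq_pair g p.
Proof. by rewrite /seq_pair -big_split /=; apply: eq_bigr => i _; rewrite mulrDr. Qed.

Lemma sp_scalef c f p : seq_pair (fun i => c * f i) p = c * seq_pair f p.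
Proof. by rewrite /seq_pair mulr_sumr; apply: eq_bigr => i _; rewrite mulrCA. Qed.

Lemma sp_shift f k p : seq_pair f ('X^k * p) = seq_pair (fun j => f (k + j)%N) p.
Proof.
rewrite [in LHS](poly_expand p) mulr_sumr sp_sum [RHS]/seq_pair.
by apply: eq_bigr => i _; rewrite -scalerAr -exprD spZ spXn.
Qed.

End SP.

Definition ann (m : {poly int}) (f : nat -> int) := forall q, seq_pair f (q * m) = 0.
Definition Lrec f := exists m, m \is monic /\ ann m f.
Definition sh (k : nat) (f : nat -> int) := fun j => f (k + j)%N.

Section Ann.
Variable m : {poly int}.
Hypothesis mm : m \is monic.

Lemma ann_mod f p : ann m f -> seq_pair f p = seq_pair f (Pdiv.Ring.rmodp p m).
Proof.
move=> H; rewrite {1}(Pdiv.RingMonic.rdivp_eq mm p) spD H add0r //.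
Qed.

Definition delta (l : nat) := fun i : nat => (Pdiv.Ring.rmodp 'X^i m)`_l.

Lemma sp_delta l p : seq_pair (delta l) p = (Pdiv.Ring.rmodp p m)`_l.
Proof.
rewrite {2}(poly_expand p) Pdiv.RingMonic.rmodp_sum // coef_sum /seq_pair.
by apply: eq_bigr => i _; rewrite Pdiv.RingMonic.rmodpZ // coefZ.
Qed.

Lemma ann_delta l : ann m (delta l).
Proof. by move=> q; rewrite sp_delta Pdiv.RingMonic.rmodp_mull // coef0. Qed.

Lemma ann_expand f : ann m f ->
  forall i, f i = \sum_(l < (size m).-1) f l * delta l i.
Proof.
move=> H i; rewrite -spXn (ann_mod _ H).
have Hs : (size (Pdiv.Ring.rmodp 'X^i m) <= (size m).-1)%N.
  rewrite -ltnS prednK ?Pdiv.Ring.ltn_rmodpN0 ?monic_neq0 //.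
  by rewrite lt0n size_poly_eq0 monic_neq0.
rewrite (sp_widen _ Hs); apply: eq_bigr => l _; rewrite mulrC //.
Qed.

Lemma ann_shift f k : ann m f -> ann m (sh k f).
Proof. by move=> H q; rewrite /sh -sp_shift mulrA H. Qed.

End Ann.

Lemma ann_mull m q f : ann m f -> ann (q * m) f.
Proof. by move=> H p; rewrite mulrA H. Qed.
Lemma ann_mulr m q f : ann m f -> ann (m * q) f.
Proof. by move=> H; rewrite mulrC; apply: ann_mull. Qed.

Lemma ann_sum m f : (forall j, seq_pair f ('X^j * m) = 0) -> ann m f.
Proof.
move=> H q; rewrite (poly_expand q) mulr_suml sp_sum big1 // => j _.
by rewrite -scalerAl spZ H mulr0.
Qed.

Lemma linrec_Lrec f : linrec f -> Lrec f.
Proof.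
case=> r [a [r0 Hf]].
pose s : {poly int} := \sum_(i < r) a i *: 'X^(r - i.+1).
have ss : (size s <= r)%N.
  apply: (leq_trans (size_sum _ _ _)); apply/bigmax_leqP => i _.
  apply: (leq_trans (size_scale_leq _ _)); rewrite size_polyXn.
  by move: (ltn_ord i); lia.
exists ('X^r - s); split.
  rewrite monicE lead_coefDl ?lead_coefXn // size_polyXn size_polyN.
  by rewrite ltnS.
apply: ann_sum => j; rewrite sp_shift spB spXn /s sp_sum.
rewrite /sh (Hf (j + r)%N) ?leq_addl // ; apply/eqP; rewrite subr_eq0; apply/eqP; apply: eq_bigr => i _.
rewrite spZ spXn; congr (_ * f _); move: (ltn_ord i); lia.
Qed.

Lemma Lrec_linrec f : Lrec f -> linrec f.
Proof.
case=> m [mm H].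
have s0 : (0 < size m)%N by rewrite lt0n size_poly_eq0 monic_neq0.
have Hl : m`_(size m).-1 = 1 by move/monicP: mm; rewrite lead_coefE.
case r0 : (size m).-1 => [|r].
  have m1 : m = 1.
    rewrite (@size1_polyC _ m); last by move: r0; lia.
    by move: Hl; rewrite r0 => ->.
  exists 1%N, (fun _ => 0); split => // n _.
  rewrite big1 => [|i _]; last by rewrite mul0r.
  by have := H 'X^n; rewrite m1 mulr1 spXn.
exists r.+1, (fun i => - m`_(r - i)); split => // n Hn.
have := H 'X^(n - r.+1).
have Hl' : m`_r.+1 = 1 by rewrite -r0.
rewrite sp_shift /seq_pair -(prednK s0) r0 big_ord_recr /= Hl' mul1r.
have -> : (n - r.+1 + r.+1 = n)%N by lia.
move/eqP; rewrite addrC addr_eq0 => /eqP ->.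
rewrite (reindex_inj rev_ord_inj) /= -sumrN; apply: eq_bigr => i _.
rewrite mulNr; congr (- (_ * f _)); move: (ltn_ord i); lia.
Qed.

Lemma coef_sumX n (c : 'I_n -> int) (k : 'I_n) :
  (\sum_(i < n) c i *: 'X^i)`_k = c k.
Proof.
rewrite coef_sum (bigD1 k) //= coefZ coefXn eqxx mulr1 big1 ?addr0 //.
move=> i ik; rewrite coefZ coefXn.
have /negbTE -> : (nat_of_ord k != i) by rewrite eq_sym.
by rewrite mulr0.
Qed.

Lemma size_sumX n (c : 'I_n -> int) : (size (\sum_(i < n) c i *: 'X^i)%R <= n)%N.
Proof.
apply: (leq_trans (size_sum _ _ _)); apply/bigmax_leqP => i _.
by apply: (leq_trans (size_scale_leq _ _)); rewrite size_polyXn.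
Qed.

Lemma Lrec_ZtO f : Lrec f -> ZtO f.
Proof.
case=> m [mm H].
have s0 : (0 < size m)%N by rewrite lt0n size_poly_eq0 monic_neq0.
exists (fun p => exists q, p = q * m); split.
- split; first by exists 0; rewrite mul0r.
  + by move=> p q [a ->] [b ->]; exists (a + b); rewrite mulrDl.
  + by move=> p q [a ->]; exists (p * a); rewrite mulrA.
- exists (size m).-1, (fun i => 'X^i) => p.
  have Hr : (size (Pdiv.Ring.rmodp p m) <= (size m).-1)%N.
    by rewrite -ltnS prednK // Pdiv.Ring.ltn_rmodpN0 ?monic_neq0.
  exists [ffun i : 'I_(size m).-1 => (Pdiv.Ring.rmodp p m)`_i]; split.
    exists (Pdiv.Ring.rdivp p m).
    under eq_bigr do rewrite ffunE.
    rewrite -(poly_expand_n Hr) {1}(Pdiv.RingMonic.rdivp_eq mm p) addrK //.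
  move=> c [q Hq]; apply/ffunP => k; rewrite ffunE.
  have E : \sum_(i < (size m).-1) c i *: 'X^i = p - q * m by rewrite -Hq opprB addrC subrK.
  have : Pdiv.Ring.rmodp (\sum_(i < (size m).-1) c i *: 'X^i) m = Pdiv.Ring.rmodp p m.
    by rewrite E Pdiv.RingMonic.rmodpB // Pdiv.RingMonic.rmodp_mull // subr0.
  rewrite Pdiv.Ring.rmodp_small; last first.
    by apply: (@leq_trans (size m).-1.+1); rewrite ?ltnS ?size_sumX ?prednK.
  by move=> <-; rewrite coef_sumX.
- by move=> p [q ->]; apply: H.
Qed.

Lemma ZtO_Lrec f : ZtO f -> Lrec f.
Proof.
case=> I [[I0 ID IM] [n [e He]] Hf].
have IS (r : seq 'I_n) (F : 'I_n -> {poly int}) :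
    (forall i, I (F i)) -> I (\sum_(i <- r) F i).
  by move=> HF; elim: r => [|a r IH]; rewrite ?big_nil ?big_cons //; apply: ID.
have IZ c p : I p -> I (c *: p) by move=> Hp; rewrite -mul_polyC; apply: IM.
have exc p : exists c : {ffun 'I_n -> int}, I (p - \sum_i c i *: e i).
  by case: (He p) => c [Hc _]; exists c.
pose cA i := projT1 (cid (exc ('X * e i))).
have HcA i : I ('X * e i - \sum_j cA i j *: e j) := projT2 (cid (exc ('X * e i))).
pose A : 'M[int]_n := \matrix_(i, j) cA i j.
pose E : 'M[{poly int}]_(n, 1) := \col_j e j.
have C1 k : I ((char_poly_mx A *m E) k 0).
  rewrite /char_poly_mx mulmxBl mul_scalar_mx !mxE.
  suff -> : \sum_j (A ^ polyC)%sesqui k j * E j 0 = \sum_j cA k j *: e j by [].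
  by apply: eq_bigr => j _; rewrite !mxE mul_polyC.
have C2 k : I (char_poly A * e k).
  have : (\adj (char_poly_mx A) *m (char_poly_mx A *m E)) k 0 = char_poly A * e k.
    by rewrite mulmxA mul_adj_mx mul_scalar_mx !mxE.
  move=> <-; rewrite mxE; apply: IS => j; exact: IM.
case: (exc 1) => c1 Hc1.
have Ichi : I (char_poly A).
  have -> : char_poly A = char_poly A * (1 - \sum_i c1 i *: e i)
                        + \sum_i c1 i *: (char_poly A * e i).
    have -> : \sum_i c1 i *: (char_poly A * e i) = char_poly A * \sum_i c1 i *: e i.
      by rewrite mulr_sumr; apply: eq_bigr => i _; rewrite scalerAr.
    by rewrite mulrBr mulr1 subrK.
  by apply: ID; [apply: IM | apply: IS => i; apply: IZ].
exists (char_poly A); split; first exact: char_poly_monic.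
by move=> q; apply: Hf; apply: IM.
Qed.

Lemma ZtO_linrec f : ZtO f <-> linrec f.
Proof.
split => [/ZtO_Lrec/Lrec_linrec // | /linrec_Lrec/Lrec_ZtO //].
Qed.

Definition inspan (g : nat -> nat -> int) (K : nat) (v : nat -> int) :=
  exists lam : nat -> int, forall j, v j = \sum_(k < K) lam k * g k j.

Lemma ex_minP (P : nat -> Prop) : (exists n, P n) ->
  exists n, P n /\ forall k, P k -> (n <= k)%N.
Proof.
case=> n; elim/ltn_ind: n => n IH Pn.
case: (pselect (exists k, P k /\ (k < n)%N)) => [[k [Pk lt]]|H].
  exact: IH k lt Pk.
exists n; split => // k Pk; rewrite leqNgt; apply/negP => lt; apply: H.
by exists k.
Qed.

Lemma sum_pad (c mu : nat -> int) N1 N : (N1 <= N)%N ->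
  \sum_(i < N1) mu i * c i = \sum_(i < N) (if (i < N1)%N then mu i else 0) * c i.
Proof.
move=> H; rewrite (big_ord_widen N (fun i => mu i * c i) H) big_mkcond /=.
by apply: eq_bigr => i _; case: ifP => _; rewrite ?mul0r.
Qed.

Section Acc.
Variable c : nat -> int.
Definition Acoord (a : int) := exists N (mu : nat -> int), a = \sum_(i < N) mu i * c i.

Lemma Acoord_comb a b x y : Acoord a -> Acoord b -> Acoord (x * a + y * b).
Proof.
case=> N1 [mu1 ->] [N2 [mu2 ->]].
exists (maxn N1 N2), (fun i => x * (if (i < N1)%N then mu1 i else 0)
                           + y * (if (i < N2)%N then mu2 i else 0)).
rewrite (sum_pad c mu1 (leq_maxl N1 N2)) (sum_pad c mu2 (leq_maxr N1 N2)).
rewrite !mulr_sumr -big_split /=; apply: eq_bigr => i _.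
by rewrite mulrDl !mulrA.
Qed.

Lemma Acoord_c n : Acoord (c n).
Proof.
exists n.+1, (fun i => (i == n)%:R); rewrite big_ord_recr /= eqxx mul1r big1 ?add0r //.
by move=> i _; rewrite (ltn_eqF (ltn_ord i)) mul0r.
Qed.

Lemma Acoord_gcd : (exists a, Acoord a /\ a != 0) ->
  exists (d : int), 0 < d /\ Acoord d /\ forall a, Acoord a -> (d %| a)%Z.
Proof.
case=> a [Aa a0].
have Hpos : exists k : nat, Acoord k%:Z /\ (0 < k)%N.
  case: (ltrgtP a 0) => [alt||] ; last by move=> E; rewrite E eqxx in a0.
    exists (absz a); split; last by rewrite absz_gt0.
    have -> : (absz a)%:Z = (-1) * a + 0 * a by rewrite mul0r addr0 mulN1r ltz0_abs.
    exact: Acoord_comb.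
  move=> agt; exists (absz a); split; last by rewrite absz_gt0.
  by rewrite gtz0_abs.
case: (ex_minP Hpos) => k [[Ak k0] kmin].
exists k%:Z; split; first by rewrite ltz_nat.
split => // b Ab.
have Ar : Acoord ((b %% k)%Z).
  have -> : (b %% k)%Z = 1 * b + (- (b %/ k)%Z) * k%:Z.
    by rewrite mul1r mulNr {2}(divz_eq b k) [_ + (b %% k)%Z]addrC addrK.
  exact: Acoord_comb.
have r0 : 0 <= (b %% k)%Z by rewrite modz_ge0 // -lt0n.
have rk : ((b %% k)%Z < k%:Z) by rewrite ltz_pmod // ltz_nat.
apply/dvdz_mod0P.
case E: (b %% k)%Z r0 rk Ar => [n|n] //= _; rewrite ltz_nat => nk An.
case: n E nk An => // n E nk An.
by have := kmin n.+1 (conj An isT); rewrite leqNgt nk.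
Qed.

End Acc.

From mathcomp Require Import ring.

Lemma acc K : forall (g F : nat -> nat -> int), (forall n, inspan g K (F n)) ->
  exists m, inspan F m (F m).
Proof.
elim: K => [|K IH] g F HF.
  exists 0%N, (fun _ => 0) => j; case: (HF 0%N) => lam H.
  by rewrite H !big_ord0.
have [L HL] := choice HF.
pose c n := L n 0%N.
pose g' k := g k.+1.
have HF' n j : F n j = c n * g 0%N j + \sum_(k < K) L n k.+1 * g' k j.
  by rewrite HL big_ord_recl.
case: (pselect (exists a, Acoord c a /\ a != 0)) => [Hex|Hno]; last first.
  have c0 n : c n = 0.
    apply/eqP; apply/negPn/negP => nz; apply: Hno; exists (c n); split => //.
    exact: Acoord_c.
  apply: (IH g' F) => n; exists (fun k => L n k.+1) => j.
  by rewrite HF' c0 mul0r add0r.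
case: (Acoord_gcd Hex) => d [d0 [[N0 [nu Hd]] Hdiv]].
pose mu n := (c n %/ d)%Z.
have Hmu n : c n = mu n * d by rewrite divzK //; apply: Hdiv; exact: Acoord_c.
pose rho k := \sum_(i < N0) nu i * L i k.+1.
pose w j := \sum_(i < N0) nu i * F i j.
have Hw j : w j = d * g 0%N j + \sum_(k < K) rho k * g' k j.
  rewrite /w; under eq_bigr do rewrite HF' mulrDr mulr_sumr.
  rewrite big_split /= Hd mulr_suml; congr (_ + _).
    by apply: eq_bigr => i _; rewrite mulrA.
  rewrite exchange_big /=; apply: eq_bigr => k _; rewrite /rho mulr_suml.
  by apply: eq_bigr => i _; rewrite mulrA.
pose F' n j := F (N0 + n)%N j - mu (N0 + n)%N * w j.
have HF'' n : inspan g' K (F' n).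
  exists (fun k => L (N0 + n)%N k.+1 - mu (N0 + n)%N * rho k) => j.
  rewrite /F' HF' Hw Hmu.
  have -> : \sum_(k < K) (L (N0 + n)%N k.+1 - mu (N0 + n)%N * rho k) * g' k j =
    \sum_(k < K) L (N0 + n)%N k.+1 * g' k j - mu (N0 + n)%N * \sum_(k < K) rho k * g' k j.
    by rewrite mulr_sumr -sumrB; apply: eq_bigr => k _; rewrite mulrBl mulrA.
  ring.
case: (IH g' F' HF'') => m' [kap Hk].
pose theta := mu (N0 + m')%N - \sum_(k < m') kap k * mu (N0 + k)%N.
exists (N0 + m')%N, (fun i => if (i < N0)%N then theta * nu i else kap (i - N0)%N) => j.
rewrite big_split_ord /=.
have -> : \sum_(i < N0) (if (lshift m' i < N0)%N then theta * nu (lshift m' i)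
                         else kap (lshift m' i - N0)%N) * F (lshift m' i) j = theta * w j.
  rewrite /w mulr_sumr; apply: eq_bigr => i _; rewrite /= ltn_ord mulrA //.
have -> : \sum_(i < m') (if (rshift N0 i < N0)%N then theta * nu (rshift N0 i)
                         else kap (rshift N0 i - N0)%N) * F (rshift N0 i) j =
          \sum_(k < m') kap k * F (N0 + k)%N j.
  apply: eq_bigr => i _; rewrite /=.
  have -> : (N0 + i < N0)%N = false by lia.
  by have -> : (N0 + i - N0 = i)%N by lia.
have E := Hk j; rewrite /F' in E.
have E2 : \sum_(k < m') kap k * (F (N0 + k)%N j - mu (N0 + k)%N * w j) =
   \sum_(k < m') kap k * F (N0 + k)%N j - (\sum_(k < m') kap k * mu (N0 + k)%N) * w j.
  rewrite mulr_suml -sumrB; apply: eq_bigr => k _; rewrite mulrBr mulrA //.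
rewrite E2 in E; rewrite /theta.
move: E; set S := \sum_(k < m') kap k * F (N0 + k)%N j.
set T := \sum_(k < m') kap k * mu (N0 + k)%N => E.
have -> : F (N0 + m')%N j = S - T * w j + mu (N0 + m')%N * w j by rewrite -E subrK.
ring.
Qed.

Lemma shifts_linrec f K (g : nat -> nat -> int) :
  (forall i, inspan g K (sh i f)) -> linrec f.
Proof.
move=> H; case: (acc H) => [[|m] [kap Hk]].
  exists 1%N, (fun _ => 0); split => // n _.
  by rewrite big1 => [|i _]; [have := Hk n; rewrite big_ord0 /sh | rewrite mul0r].
exists m.+1, (fun i => kap (m.+1 - i.+1)%N); split => // n Hn.
have := Hk (n - m.+1)%N; rewrite /sh.
have -> : (m.+1 + (n - m.+1) = n)%N by lia.
move=> ->; rewrite (reindex_inj rev_ord_inj) /=; apply: eq_bigr => i _.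
congr (kap _ * f _); move: (ltn_ord i); lia.
Qed.

Section AddF.
Variables (U V : zmodType) (F : U -> V).
Hypothesis HF : forall x y, F (x + y) = F x + F y.
Lemma af0 : F 0 = 0.
Proof. by apply: (addrI (F 0)); rewrite -HF !addr0. Qed.
Lemma afN x : F (- x) = - F x.
Proof. by apply: (addrI (F x)); rewrite -HF !subrr af0. Qed.
Lemma af_sum (I : Type) (r : seq I) (P : pred I) (E : I -> U) :
  F (\sum_(i <- r | P i) E i) = \sum_(i <- r | P i) F (E i).
Proof. exact: (big_morph F HF af0). Qed.
Lemma afMn x k : F (x *+ k) = F x *+ k.
Proof. by elim: k => [|k IH]; rewrite ?mulr0n ?af0 // !mulrS HF IH. Qed.
Lemma afMz x c : F (x *~ c) = F x *~ c.
Proof. by case: c => k; rewrite ?NegzE ?mulrNz ?afN afMn. Qed.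
End AddF.

Lemma sum_pair r1 r2 (F : nat -> nat -> int) :
  \sum_(l < r1) \sum_(l' < r2) F l l' = \sum_(k < r1 * r2) F (k %/ r2)%N (k %% r2)%N.
Proof.
elim: r1 => [|r1 IH]; first by rewrite !big_ord0.
rewrite big_ord_recr /= IH mulSnr big_split_ord /=; congr (_ + _).
apply: eq_bigr => t _.
have r2p : (0 < r2)%N by move: (ltn_ord t); lia.
by rewrite divnMDl // modnMDl divn_small // modn_small // addn0.
Qed.

Lemma inspan_mul g1 K1 u g2 K2 v : inspan g1 K1 u -> inspan g2 K2 v ->
  inspan (fun k j => g1 (k %/ K2)%N j * g2 (k %% K2)%N j) (K1 * K2) (fun j => u j * v j).
Proof.
case=> a Ha [b Hb]; exists (fun k => a (k %/ K2)%N * b (k %% K2)%N) => j.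
rewrite Ha Hb mulr_suml -[RHS](sum_pair K1 K2 (fun l l' => a l * b l' * (g1 l j * g2 l' j))).
apply: eq_bigr => l _.
rewrite mulr_sumr; apply: eq_bigr => l' _; rewrite mulrACA //.
Qed.

Lemma Lrec_sh k f : Lrec f -> Lrec (sh k f).
Proof. by case=> m [mm H]; exists m; split => //; apply: ann_shift. Qed.

Lemma Lrec_span f : Lrec f -> exists K g, forall i, inspan g K (sh i f).
Proof.
case=> m [mm H]; exists (size m).-1, (fun l => delta m l) => i.
exists (fun l => sh i f l) => j; exact: (ann_expand mm (ann_shift i H)).
Qed.

Lemma Lrec_mul f g : Lrec f -> Lrec g -> Lrec (fun j => f j * g j).
Proof.
move=> /Lrec_span [K1 [g1 H1]] /Lrec_span [K2 [g2 H2]].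
apply: linrec_Lrec; apply: (@shifts_linrec _ (K1 * K2)
   (fun k j => g1 (k %/ K2)%N j * g2 (k %% K2)%N j)) => i.
exact: (inspan_mul (H1 i) (H2 i)).
Qed.

Lemma Lrec_add f g : Lrec f -> Lrec g -> Lrec (fun j => f j + g j).
Proof.
case=> m1 [m1m H1] [m2 [m2m H2]]; exists (m1 * m2); split; first by rewrite monicMl.
move=> q; rewrite sp_addf (ann_mulr _ H1) (ann_mull _ H2) addr0 //.
Qed.

Lemma Lrec_opp f : Lrec f -> Lrec (fun j => - f j).
Proof.
case=> m [mm H]; exists m; split => // q.
have -> : (fun j => - f j) = (fun j => (-1) * f j) by apply: funext => j; rewrite mulN1r.
by rewrite sp_scalef H mulr0.
Qed.

Lemma Lrec_0 : Lrec (fun _ => 0).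
Proof.
exists 1; split; first exact: monic1.
by move=> q; rewrite /seq_pair big1 // => i _; rewrite mulr0.
Qed.

Lemma Lrec_1 : Lrec (fun _ => 1).
Proof.
apply: linrec_Lrec; exists 1%N, (fun _ => 1); split => // n _.
by rewrite big_ord1 mul1r.
Qed.

Record Lt := mkL { lval : nat -> int; lvalP : Lrec lval }.

HB.instance Definition _ := gen_eqMixin Lt.
HB.instance Definition _ := gen_choiceMixin Lt.

Lemma Lt_ext (x y : Lt) : (forall n, lval x n = lval y n) -> x = y.
Proof.
case: x => f fP; case: y => g gP /= H.
have E : f = g by apply: funext => n; exact: H.
subst g; by rewrite (Prop_irrelevance fP gP).
Qed.

Definition Lzero := mkL Lrec_0.
Definition Lopp (x : Lt) := mkL (Lrec_opp (lvalP x)).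
Definition Ladd (x y : Lt) := mkL (Lrec_add (lvalP x) (lvalP y)).
Definition Lone := mkL Lrec_1.
Definition Lmul (x y : Lt) := mkL (Lrec_mul (lvalP x) (lvalP y)).

Lemma LaddA : associative Ladd.
Proof. by move=> x y z; apply: Lt_ext => n /=; rewrite addrA. Qed.
Lemma LaddC : commutative Ladd.
Proof. by move=> x y; apply: Lt_ext => n /=; rewrite addrC. Qed.
Lemma Ladd0 : left_id Lzero Ladd.
Proof. by move=> x; apply: Lt_ext => n /=; rewrite add0r. Qed.
Lemma LaddN : left_inverse Lzero Lopp Ladd.
Proof. by move=> x; apply: Lt_ext => n /=; rewrite addNr. Qed.

HB.instance Definition _ := GRing.isZmodule.Build Lt LaddA LaddC Ladd0 LaddN.

Lemma LmulA : associative Lmul.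
Proof. by move=> x y z; apply: Lt_ext => n /=; rewrite mulrA. Qed.
Lemma LmulC : commutative Lmul.
Proof. by move=> x y; apply: Lt_ext => n /=; rewrite mulrC. Qed.
Lemma Lmul1 : left_id Lone Lmul.
Proof. by move=> x; apply: Lt_ext => n /=; rewrite mul1r. Qed.
Lemma LmulD : left_distributive Lmul Ladd.
Proof. by move=> x y z; apply: Lt_ext => n /=; rewrite mulrDl. Qed.

HB.instance Definition _ := GRing.Zmodule_isComPzRing.Build Lt LmulA LmulC Lmul1 LmulD.

Lemma lvalD (x y : Lt) n : lval (x + y) n = lval x n + lval y n. Proof. by []. Qed.
Lemma lvalM (x y : Lt) n : lval (x * y) n = lval x n * lval y n. Proof. by []. Qed.
Lemma lval1 n : lval 1 n = 1. Proof. by []. Qed.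
Lemma lval_sum n (I : Type) (r : seq I) (P : pred I) (E : I -> Lt) :
  lval (\sum_(i <- r | P i) E i) n = \sum_(i <- r | P i) lval (E i) n.
Proof. exact: (af_sum (F := fun x : Lt => lval x n)). Qed.
Lemma lvalMz (x : Lt) c n : lval (x *~ c) n = lval x n * c.
Proof. by rewrite (afMz (F := fun x : Lt => lval x n)) // mulrzz. Qed.

Lemma Lrec_delta m l : m \is monic -> Lrec (delta m l).
Proof. by move=> mm; exists m; split => //; apply: ann_delta. Qed.

Definition dL m (mm : m \is monic) l : Lt := mkL (Lrec_delta l mm).
Definition mL (x : Lt) : {poly int} := projT1 (cid (lvalP x)).
Lemma mLP x : mL x \is monic /\ ann (mL x) (lval x).
Proof. exact: (projT2 (cid (lvalP x))). Qed.
Definition shL k (x : Lt) : Lt := mkL (Lrec_sh k (lvalP x)).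

Definition Dl (x : Lt) : seq (Lt * Lt) :=
  [seq (shL l x, dL (proj1 (mLP x)) l) | l <- index_iota 0 (size (mL x)).-1].
Definition el (x : Lt) : int := lval x 0.

Lemma D_prop x i j : lval x (i + j) = \sum_(p <- Dl x) lval p.1 i * lval p.2 j.
Proof.
rewrite big_map big_mkord /=.
have := ann_expand (proj1 (mLP x)) (ann_shift i (proj2 (mLP x))) j.
rewrite /sh => ->; apply: eq_bigr => l _; rewrite addnC //.
Qed.

Section Expand.
Variables (M : {poly int}) (mM : M \is monic).
Local Notation r := (size M).-1.
Local Notation d := (dL mM).

Lemma Lexpand (x : Lt) : ann M (lval x) -> x = \sum_(l < r) d l *~ lval x l.
Proof.
move=> H; apply: Lt_ext => n; rewrite lval_sum.
under eq_bigr do rewrite lvalMz.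
by rewrite {1}(ann_expand mM H n); apply: eq_bigr => l _; rewrite mulrC.
Qed.

Lemma bexpand (W : zmodType) (b : Lt -> Lt -> W) (bb : biadditive b) x y :
  ann M (lval x) -> ann M (lval y) ->
  b x y = \sum_(l < r) \sum_(l' < r) b (d l) (d l') *~ (lval x l * lval y l').
Proof.
case: bb => b1 b2 Hx Hy.
transitivity (b (\sum_(l < r) d l *~ lval x l) (\sum_(l < r) d l *~ lval y l)).
  by rewrite -Lexpand // -Lexpand.
rewrite (af_sum (F := fun u => b u _)); last by move=> u v; apply: b1.
apply: eq_bigr => l _; rewrite (afMz (F := fun u => b u _)); last by move=> u v; apply: b1.
rewrite (af_sum (F := b (d l))) // mulrz_suml; apply: eq_bigr => l' _.
by rewrite (afMz (F := b (d l))) // mulrzA_C.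
Qed.

Lemma texpand (W : zmodType) (b : Lt -> Lt -> Lt -> W) (bb : triadditive b) x y z :
  ann M (lval x) -> ann M (lval y) -> ann M (lval z) ->
  b x y z = \sum_(l < r) \sum_(l' < r) \sum_(l'' < r)
     b (d l) (d l') (d l'') *~ (lval x l * lval y l' * lval z l'').
Proof.
case: bb => b1 [b2 b3] Hx Hy Hz.
transitivity (b (\sum_(l < r) d l *~ lval x l) (\sum_(l < r) d l *~ lval y l)
                (\sum_(l < r) d l *~ lval z l)).
  by rewrite -Lexpand // -Lexpand // -Lexpand.
rewrite (af_sum (F := fun u => b u _ _)); last by move=> u v; apply: b1.
apply: eq_bigr => l _; rewrite (afMz (F := fun u => b u _ _)); last by move=> u v; apply: b1.
rewrite (af_sum (F := fun u => b _ u _)); last by move=> u v; apply: b2.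
rewrite mulrz_suml; apply: eq_bigr => l' _.
rewrite (afMz (F := fun u => b _ u _)); last by move=> u v; apply: b2.
rewrite (af_sum (F := fun u => b _ _ u)); last by move=> u v; apply: b3.
rewrite !mulrz_suml; apply: eq_bigr => l'' _.
rewrite (afMz (F := fun u => b _ _ u)); last by move=> u v; apply: b3.
by rewrite !mulrzA_C.
Qed.

End Expand.

Lemma ann_prodL (xs : seq Lt) x : x \in xs -> ann (\prod_(y <- xs) mL y) (lval x).
Proof.
elim: xs => // y xs IH; rewrite in_cons big_cons => /orP [/eqP ->|/IH H].
  by apply: ann_mulr; exact: (proj2 (mLP y)).
exact: ann_mull.
Qed.

Lemma monic_prodL (xs : seq Lt) : \prod_(y <- xs) mL y \is monic.
Proof. by apply: monic_prod => y _; exact: (proj1 (mLP y)). Qed.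

Lemma teq2_L (s t : seq (Lt * Lt)) :
  (forall i j, \sum_(p <- s) lval p.1 i * lval p.2 j = \sum_(p <- t) lval p.1 i * lval p.2 j) ->
  teq2 s t.
Proof.
move=> H W b bb.
pose xs := [seq p.1 | p <- s ++ t] ++ [seq p.2 | p <- s ++ t].
have mM := monic_prodL xs.
have annx x : x \in xs -> ann (\prod_(y <- xs) mL y) (lval x) by apply: ann_prodL.
have E (u : seq (Lt * Lt)) : {subset u <= s ++ t} ->
  \sum_(p <- u) b p.1 p.2 = \sum_(l < (size (\prod_(y <- xs) mL y)).-1)
     \sum_(l' < (size (\prod_(y <- xs) mL y)).-1)
     b (dL mM l) (dL mM l') *~ \sum_(p <- u) (lval p.1 l * lval p.2 l').
  elim: u => [|p u IH] Hsub.
    rewrite big_nil; symmetry; apply: big1 => l _; apply: big1 => l' _.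
    by rewrite big_nil mulr0z.
  rewrite big_cons IH; last by move=> q qu; apply: Hsub; rewrite in_cons qu orbT.
  have pst : p \in s ++ t by apply: Hsub; rewrite in_cons eqxx.
  have h1 : ann (\prod_(y <- xs) mL y) (lval p.1).
    by apply: annx; rewrite mem_cat (map_f (fun q => q.1) pst).
  have h2 : ann (\prod_(y <- xs) mL y) (lval p.2).
    by apply: annx; rewrite mem_cat (map_f (fun q => q.2) pst) orbT.
  rewrite (bexpand mM bb h1 h2).
  rewrite -big_split; apply: eq_bigr => l _; rewrite -big_split; apply: eq_bigr => l' _.
  by rewrite big_cons mulrzDr.
rewrite (E s); last by move=> q qs; rewrite mem_cat qs.
rewrite (E t); last by move=> q qt; rewrite mem_cat qt orbT.
by apply: eq_bigr => l _; apply: eq_bigr => l' _; rewrite H.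
Qed.

Lemma teq3_L (s t : seq (Lt * Lt * Lt)) :
  (forall i j k, \sum_(p <- s) lval p.1.1 i * lval p.1.2 j * lval p.2 k =
                 \sum_(p <- t) lval p.1.1 i * lval p.1.2 j * lval p.2 k) ->
  teq3 s t.
Proof.
move=> H W b bb.
pose xs := [seq p.1.1 | p <- s ++ t] ++ [seq p.1.2 | p <- s ++ t] ++ [seq p.2 | p <- s ++ t].
have mM := monic_prodL xs.
have annx x : x \in xs -> ann (\prod_(y <- xs) mL y) (lval x) by apply: ann_prodL.
have E (u : seq (Lt * Lt * Lt)) : {subset u <= s ++ t} ->
  \sum_(p <- u) b p.1.1 p.1.2 p.2 = \sum_(l < (size (\prod_(y <- xs) mL y)).-1)
     \sum_(l' < (size (\prod_(y <- xs) mL y)).-1)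
     \sum_(l'' < (size (\prod_(y <- xs) mL y)).-1)
     b (dL mM l) (dL mM l') (dL mM l'') *~
       \sum_(p <- u) (lval p.1.1 l * lval p.1.2 l' * lval p.2 l'').
  elim: u => [|p u IH] Hsub.
    rewrite big_nil; symmetry; apply: big1 => l _; apply: big1 => l' _.
    by apply: big1 => l'' _; rewrite big_nil mulr0z.
  rewrite big_cons IH; last by move=> q qu; apply: Hsub; rewrite in_cons qu orbT.
  have pst : p \in s ++ t by apply: Hsub; rewrite in_cons eqxx.
  have h1 : ann (\prod_(y <- xs) mL y) (lval p.1.1).
    by apply: annx; rewrite mem_cat (map_f (fun q => q.1.1) pst).
  have h2 : ann (\prod_(y <- xs) mL y) (lval p.1.2).
    by apply: annx; rewrite !mem_cat (map_f (fun q => q.1.2) pst) orbT.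
  have h3 : ann (\prod_(y <- xs) mL y) (lval p.2).
    by apply: annx; rewrite !mem_cat (map_f (fun q => q.2) pst) !orbT.
  rewrite (texpand mM bb h1 h2 h3).
  rewrite -big_split; apply: eq_bigr => l _; rewrite -big_split; apply: eq_bigr => l' _.
  rewrite -big_split; apply: eq_bigr => l'' _.
  by rewrite big_cons mulrzDr.
rewrite (E s); last by move=> q qs; rewrite mem_cat qs.
rewrite (E t); last by move=> q qt; rewrite mem_cat qt orbT.
apply: eq_bigr => l _; apply: eq_bigr => l' _; apply: eq_bigr => l'' _.
by rewrite H.
Qed.

Lemma Lax : biring_axioms Dl el.
Proof.
split.
- move=> x n n0 H; apply: Lt_ext => k.
  have := congr1 (fun y : Lt => lval y k) H.
  rewrite (afMn (F := fun y : Lt => lval y k)) //= => /eqP.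
  rewrite -mulr_natr mulf_eq0 pnatr_eq0 => /orP [/eqP -> // | /eqP n00].
  by rewrite n00 in n0.
- by split => //.
- split; [|split].
  + by move=> x y; apply: teq2_L => i j; rewrite big_cat -!D_prop.
  + by apply: teq2_L => i j; rewrite -D_prop big_cons big_nil /= mulr1 addr0.
  + move=> x y; apply: teq2_L => i j; rewrite -D_prop big_allpairs_dep /=.
    rewrite !D_prop mulr_suml; apply: eq_bigr => p _.
    rewrite mulr_sumr; apply: eq_bigr => q _; rewrite mulrACA //.
- move=> x; split; apply: Lt_ext => n; rewrite lval_sum.
  + have := D_prop x 0 n; rewrite add0n => ->; apply: eq_bigr => p _; rewrite lvalMz mulrC //.
  + have := D_prop x n 0; rewrite addn0 => ->; apply: eq_bigr => p _; rewrite lvalMz //.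
- move=> x; apply: teq3_L => i j k; rewrite !big_allpairs_dep /=.
  transitivity (lval x (i + j + k)%N).
    rewrite D_prop; apply: eq_bigr => p _; rewrite D_prop mulr_suml //.
  rewrite -addnA D_prop; apply: eq_bigr => p _; rewrite D_prop mulr_sumr.
  by apply: eq_bigr => q _; rewrite mulrA.
Qed.

Definition L : biring := BiRing Lax.

Section Cofree.
Variables (B : biring) (phi : B -> int).
Hypothesis Hphi : ring_hom_to_Z phi.

Fixpoint Phin (n : nat) (x : B) : int :=
  match n with
  | 0 => @br_e B x
  | k.+1 => \sum_(p <- @br_D B x) phi p.1 * Phin k p.2
  end.

Let ax := br_ax B.

Lemma phiD x y : phi (x + y) = phi x + phi y.
Proof. by case: Hphi. Qed.

Lemma Phin_add n x y : Phin n (x + y) = Phin n x + Phin n y.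
Proof.
elim: n x y => [|n IH] x y /=.
  by case: ax => _ [eD _] _ _ _; apply: eD.
case: ax => _ _ [DD _] _ _.
rewrite (DD x y int (fun a c => phi a * Phin n c)) ?big_cat //.
by split => a b c; rewrite ?phiD ?IH ?mulrDl ?mulrDr.
Qed.

Lemma Phin_split i j x : Phin (i + j) x = \sum_(p <- @br_D B x) Phin i p.1 * Phin j p.2.
Proof.
elim: i x => [|i IH] x.
  rewrite add0n /=; case: ax => _ _ _ cu _.
  rewrite -[in LHS](proj1 (cu x)) (af_sum (F := Phin j)); last exact: Phin_add.
  apply: eq_bigr => p _; rewrite (afMz (F := Phin j)); last exact: Phin_add.
  by rewrite mulrzz mulrC.
rewrite addSn /=.
transitivity (\sum_(p <- [seq (p.1, q.1, q.2) | p <- @br_D B x, q <- @br_D B p.2])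
                 phi p.1.1 * Phin i p.1.2 * Phin j p.2).
  rewrite big_allpairs_dep /=; apply: eq_bigr => p _; rewrite IH mulr_sumr.
  by apply: eq_bigr => q _; rewrite mulrA.
case: ax => _ _ _ _ ca.
rewrite -(ca x int (fun a b c => phi a * Phin i b * Phin j c)).
  rewrite big_allpairs_dep /=; apply: eq_bigr => p _ /=; rewrite mulr_suml //.
split; [|split] => a b c d; rewrite ?phiD ?Phin_add ?mulrDl ?mulrDr ?mulrDl //.
Qed.

Lemma Phin_one n : Phin n 1 = 1.
Proof.
elim: n => [|n IH] /=.
  by case: ax => _ [_ [e1 _]] _ _ _.
case: ax => _ _ [_ [D1 _]] _ _.
rewrite (D1 int (fun a c => phi a * Phin n c)).
  by rewrite big_cons big_nil /= IH mulr1 addr0; case: Hphi => _ [].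
by split => a b c; rewrite ?phiD ?Phin_add ?mulrDl ?mulrDr.
Qed.

Lemma Phin_mul n x y : Phin n (x * y) = Phin n x * Phin n y.
Proof.
elim: n x y => [|n IH] x y /=.
  by case: ax => _ [_ [_ eM]] _ _ _.
case: ax => _ _ [_ [_ DM]] _ _.
rewrite (DM x y int (fun a c => phi a * Phin n c)).
  rewrite big_allpairs_dep /= mulr_suml; apply: eq_bigr => p _.
  rewrite mulr_sumr; apply: eq_bigr => q _; rewrite IH.
  by case: Hphi => _ [_ ->]; rewrite mulrACA.
by split => a b c; rewrite ?phiD ?Phin_add ?mulrDl ?mulrDr.
Qed.

Lemma Phi_Lrec x : Lrec (fun n => Phin n x).
Proof.
apply: linrec_Lrec.
apply: (@shifts_linrec _ (size (@br_D B x))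
          (fun k j => Phin j (nth (0, 0) (@br_D B x) k).2)) => i.
exists (fun k => Phin i (nth (0, 0) (@br_D B x) k).1) => j.
by rewrite /sh Phin_split (big_nth (0, 0)) big_mkord.
Qed.

Definition Phi (x : B) : L := mkL (Phi_Lrec x).

Lemma Phi_hom : biring_hom Phi.
Proof.
split.
- by move=> x y; apply: Lt_ext => n /=; rewrite Phin_add.
- by apply: Lt_ext => n /=; rewrite Phin_one.
- by move=> x y; apply: Lt_ext => n /=; rewrite Phin_mul.
- by [].
- move=> x; apply: teq2_L => i j; rewrite -D_prop big_map /=.
  exact: Phin_split.
Qed.

Lemma Phi_1 b : lval (Phi b) 1 = phi b.
Proof.
rewrite /=.
case: ax => _ _ _ cu _.
rewrite -[in RHS](proj2 (cu b)) (af_sum (F := phi)); last exact: phiD.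
apply: eq_bigr => p _.
by rewrite (afMz (F := phi)) ?mulrzz //; exact: phiD.
Qed.

Lemma Phi_uniq (Psi : B -> L) : biring_hom Psi -> (forall b, lval (Psi b) 1 = phi b) ->
  forall b, Psi b = Phi b.
Proof.
case=> _ _ _ He HD H1.
have E n b : lval (Psi b) n = Phin n b.
  elim: n b => [|n IH] b; first exact: He.
  rewrite -add1n D_prop.
  rewrite (HD b int (fun u v : L => lval u 1 * lval v n)).
    by rewrite big_map /=; apply: eq_bigr => p _; rewrite H1 IH.
  by split => u v w /=; rewrite ?mulrDl ?mulrDr.
by move=> b; apply: Lt_ext => n; rewrite E.
Qed.

End Cofree.
Unset Implicit Arguments.
Theorem mainTheorem2 :
  (forall f : nat -> int, ZtO f <-> linrec f) /\
  exists (L : biring) (iota : L -> nat -> int),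
    [/\ (* L is identified with Z[t]^o, sequences f_n = f(t^n) *)
        injective iota /\ (forall f, ZtO f <-> exists x, iota x = f),
        (* ring structure: Hadamard product, unit (1,1,1,...) *)
        (forall (x y : L) n, iota (x + y) n = iota x n + iota y n) /\
        (forall (x y : L) n, iota (x * y) n = iota x n * iota y n) /\
        (forall n, iota 1 n = 1),
        (* co-ring structure dual to the multiplication of Z[t] *)
        (forall x : L, @br_e L x = iota x 0%N) /\
        (forall (x : L) (i j : nat),
           iota x (i + j)%N = \sum_(p <- @br_D L x) iota p.1 i * iota p.2 j)
      & (* cofreeness on Z, with counit pi(f) = f_1 *)
        forall (B : biring) (phi : B -> int), ring_hom_to_Z phi ->
          exists Phi : B -> L,
            (biring_hom Phi /\ forall b, iota (Phi b) 1%N = phi b) /\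
            forall Psi : B -> L,
              biring_hom Psi -> (forall b, iota (Psi b) 1%N = phi b) ->
              forall b, Psi b = Phi b].
Proof.
split; first exact: ZtO_linrec.
exists L, lval; split.
- split.
    by move=> x y E; apply: Lt_ext => n; rewrite E.
  move=> f; split.
    by move=> H; exists (mkL (ZtO_Lrec H)).
  by case=> x <-; apply: Lrec_ZtO; exact: lvalP.
- by [].
- by split => // x i j; exact: D_prop.
- move=> B phi Hphi; exists (Phi Hphi); split.
    by split; [exact: Phi_hom | exact: Phi_1].
  by move=> Psi HPsi H1 b; apply: Phi_uniq.
Qed.
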